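(* Every topological space with the discrete countable chain condition (DCCC) is selectively $3$-star-ccc.
   Context: No separation axioms are assumed. A space has the DCCC if every discrete family of open sets is countable. For $B\subseteq X$ and a family $\mathcal{U}$ of subsets of $X$: $\operatorname{st}^1(B,\mathcal{U})=\bigcup\{U\in\mathcal{U}:U\cap B\neq\emptyset\}$ and $\operatorname{st}^{n+1}(B,\mathcal{U})=\bigcup\{U\in\mathcal{U}:U\cap\operatorname{st}^n(B,\mathcal{U})\neq\emptyset\}$. A space $X$ is selectively $3$-star-ccc if for every open cover $\mathcal{U}$ of $X$ and every sequence $(\mathcal{A}_n:n\in\omega)$ of maximal pairwise disjoint families of open subsets of $X$, there is a sequence $(A_n\in\mathcal{A}_n:n\in\omega)$ with $\operatorname{st}^3(\bigcup_{n\in\omega}A_n,\mathcal{U})=X$. *)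

(* Defs.v *)
From mathcomp Require Import all_boot.
From mathcomp Require Import boolp classical_sets cardinality topology.
Set Implicit Arguments. Unset Strict Implicit. Unset Printing Implicit Defensive.
Local Open Scope classical_set_scope.

Definition discrete_family (T : topologicalType) (F : set (set T)) : Prop :=
  forall x : T, exists V : set T, [/\ open V, V x &
    forall A B, F A -> F B -> A `&` V !=set0 -> B `&` V !=set0 -> A = B].

Definition DCCC (T : topologicalType) : Prop :=
  forall F : set (set T), (forall A, F A -> open A) -> discrete_family F ->
    countable F.

Definition open_cover (T : topologicalType) (U : set (set T)) : Prop :=
  (forall A, U A -> open A) /\ \bigcup_(A in U) A = setT.

Definition pairwise_disjoint_open (T : topologicalType) (F : set (set T)) : Prop :=
  (forall A, F A -> open A) /\
  (forall A B, F A -> F B -> A <> B -> A `&` B = set0).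

Definition maximal_disjoint_open (T : topologicalType) (F : set (set T)) : Prop :=
  pairwise_disjoint_open F /\
  (forall G, pairwise_disjoint_open G -> F `<=` G -> G = F).

Definition st1 (T : Type) (B : set T) (U : set (set T)) : set T :=
  \bigcup_(A in [set A | U A /\ A `&` B !=set0]) A.

Fixpoint stn (T : Type) (n : nat) (B : set T) (U : set (set T)) : set T :=
  match n with
  | 0 => st1 B U          (* stn 0 = st^1 *)
  | k.+1 => st1 (stn k B U) U
  end.

Definition st (T : Type) (n : nat) (B : set T) (U : set (set T)) : set T :=
  stn n.-1 B U.

Definition selectively_3_star_ccc (T : topologicalType) : Prop :=
  forall (U : set (set T)) (A : nat -> set (set T)),
    open_cover U -> (forall n, maximal_disjoint_open (A n)) ->
    exists S : nat -> set T, (forall n, A n (S n)) /\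
      st 3 (\bigcup_(n in setT) S n) U = setT.

(* Main.v *)
Require Import Defs.
From mathcomp Require Import all_boot.
From mathcomp Require Import boolp classical_sets cardinality topology.
Set Implicit Arguments. Unset Strict Implicit. Unset Printing Implicit Defensive.
Local Open Scope classical_set_scope.

Lemma mdo_dense (T : topologicalType) (F : set (set T)) (O : set T) :
  maximal_disjoint_open F -> open O -> O !=set0 -> exists A, F A /\ A `&` O !=set0.
Proof.
move=> [[Fo Fd] Fm] oO [p Op].
apply: contrapT => nex.
have dis : forall A, F A -> A `&` O = set0.
  move=> A FA; apply/seteqP; split => // q [Aq Oq].
  by apply: nex; exists A; split => //; exists q.
have G : pairwise_disjoint_open (F `|` [set O]).
  split.
    by move=> A [/Fo|->].
  move=> A B [FA|->] [FB|->] AB.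
  - exact: Fd.
  - exact: dis.
  - by rewrite setIC; exact: dis.
  - by [].
have := Fm _ G (@subsetUl _ F [set O]) => E.
have FO : F O by rewrite -E; right.
by apply: nex; exists O; split => //; exists p.
Qed.

Lemma mdo_empty (T : topologicalType) (F : set (set T)) :
  maximal_disjoint_open F -> F set0.
Proof.
move=> [[Fo Fd] Fm].
have G : pairwise_disjoint_open (F `|` [set set0]).
  split.
    by move=> A [/Fo|->] //; exact: open0.
  move=> A B [FA|->] [FB|->] AB.
  - exact: Fd.
  - by rewrite setI0.
  - by rewrite set0I.
  - by [].
have := Fm _ G (@subsetUl _ F [set set0]) => E.
by rewrite -E; right.
Qed.

Theorem corollary5 (T : topologicalType) : DCCC T -> selectively_3_star_ccc T.
Proof.
move=> dccc U A [Uo Ucov] Amax.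
have : forall x : T, exists W, U W /\ W x.
  move=> x; have : (\bigcup_(A in U) A) x by rewrite Ucov.
  by case=> W UW Wx; exists W.
case/choice => u uP.
pose P (D : set T) := forall x y W, D x -> D y -> U W ->
  W `&` u x !=set0 -> W `&` u y !=set0 -> x = y.
have [D [PD Dmax]] : exists D, P D /\ forall B, D `<` B -> ~ P B.
  apply: Zorn_bigcup => F FP tot x y W [X FX Xx] [Y FY Yy] UW h1 h2.
  have [XY|YX] := tot _ _ FX FY.
  - exact: (FP _ FY x y W (XY _ Xx) Yy).
  - exact: (FP _ FX x y W Xx (YX _ Yy)).
have cover : forall z, exists y W, [/\ D y, U W, W `&` u z !=set0 & W `&` u y !=set0].
  move=> z; case: (pselect (D z)) => Dz.
    exists z, (u z); have [h1 h2] := uP z.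
    by split => //; exists z.
  apply: contrapT => nex; apply: (Dmax (D `|` [set z])).
    split; first exact: subsetUl.
    by move=> /(_ z (or_intror erefl)).
  move=> x y W [Dx|->] [Dy|->] UW h1 h2.
  - exact: (PD x y W).
  - by exfalso; apply: nex; exists x, W.
  - by exfalso; apply: nex; exists y, W.
  - by [].
have cD : countable D.
  have cF : countable (u @` D).
    apply: dccc.
      by move=> _ [x _ <-]; exact: Uo (proj1 (uP x)).
    move=> p; exists (u p); have [h1 h2] := uP p; split => //.
      exact: Uo.
    move=> _ _ [x Dx <-] [y Dy <-] hx hy.
    by rewrite (PD x y (u p) Dx Dy h1); [| rewrite setIC | rewrite setIC].
  case/countable_injP: cF => f finj; apply/countable_injP.
  exists (fun x => f (u x)) => x y Dx Dy /= e.
  have e' : u x = u y.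
    by apply: finj => //; rewrite inE; [exists x | exists y] => //; exact/set_mem.
  apply: (PD x y (u x) (set_mem Dx) (set_mem Dy) (proj1 (uP x))).
  - by exists x; have [_ h] := uP x.
  - by rewrite e'; exists y; have [_ h] := uP y.
case/countable_injP: cD => f finj.
have : forall n, exists S, A n S /\ forall x, D x -> f x = n -> S `&` u x !=set0.
  move=> n; case: (pselect (exists x, D x /\ f x = n)) => [[x [Dx fx]]|nex].
    have [S [AS hS]] := mdo_dense (Amax n) (Uo _ (proj1 (uP x))) (ex_intro _ x (proj2 (uP x))).
    exists S; split => // y Dy fy.
    have -> : y = x by apply: finj; rewrite ?inE // fx fy.
    exact: hS.
  exists set0; split; first exact: mdo_empty.
  by move=> x Dx fx; exfalso; apply: nex; exists x.
case/choice => S SP; exists S; split; first by move=> n; exact: (proj1 (SP n)).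
apply/seteqP; split => // z _.
have [y [W [Dy UW [q [Wq uzq]] [r [Wr uyr]]]]] := cover z.
have [s [Ss uys]] := (proj2 (SP (f y))) y Dy erefl.
rewrite /st /=.
have h1 : st1 (\bigcup_(n in setT) S n) U r.
  exists (u y); last by [].
  split; first exact: (proj1 (uP y)).
  by exists s; split => //; exists (f y).
have h2 : st1 (st1 (\bigcup_(n in setT) S n) U) U q.
  by exists W => //; split => //; exists r.
exists (u z); last exact: (proj2 (uP z)).
by split; [exact: (proj1 (uP z)) | exists q].
Qed.
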